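(* Let $\delta>0$ with $1/\delta\in\mathbb N$ and $\epsilon_{\mathrm{large}}>0$. Let $I_C$ be a set of items packed (stacked one on top of the other) inside a horizontal container $C\subseteq K=[0,N]^2$, each of placed width greater than $\epsilon_{\mathrm{large}}N$. Then there exist a set $I'_C\subseteq I_C$ with $|I'_C|\ge|I_C|-g(\delta,\epsilon_{\mathrm{large}})$, where $g$ depends only on $\delta$ and $\epsilon_{\mathrm{large}}$, and pairwise disjoint horizontal containers $C_1,\dots,C_{1/\delta}$, all lying inside $C$, which together pack all items of $I'_C$ (stacked inside each container), such that the total area inside $\bigcup_{j=1}^{1/\delta}C_j$ not occupied by any item is at most $\delta\cdot a(C)$, where $a(C)=w(C)h(C)$. (Symmetrically for vertical containers with items of placed height greater than $\epsilon_{\mathrm{large}}N$.)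
   Context: A container is an open axis-parallel rectangle $C\subseteq K$ with integer corner coordinates, labelled horizontal, vertical, or area; $w(C),h(C)$ denote its width and height. Items inside a horizontal container are stacked one on top of the other (their vertical projections are pairwise disjoint); items inside a vertical container are placed one next to the other (their horizontal projections are pairwise disjoint). *)

(* Defs.v *)
From mathcomp Require Import all_boot all_order all_algebra.
Set Implicit Arguments. Unset Strict Implicit. Unset Printing Implicit Defensive.
Import Order.TTheory GRing.Theory Num.Theory.
Local Open Scope ring_scope.

(* A container: open axis-parallel rectangle (cx, cx+cw) x (cy, cy+ch)
   with integer (natural) corner coordinates. *)
Record container := Container { cx : nat; cy : nat; cw : nat; ch : nat }.

Definition in_K (N : nat) (C : container) : Prop :=
  (cx C + cw C <= N)%N /\ (cy C + ch C <= N)%N.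

Definition sub_container (C D : container) : Prop :=
  [/\ (cx D <= cx C)%N, (cx C + cw C <= cx D + cw D)%N,
      (cy D <= cy C)%N & (cy C + ch C <= cy D + ch D)%N].

Definition in_cont (R : realFieldType) (C : container) (p : R * R) : bool :=
  [&& (cx C)%:R < p.1, p.1 < (cx C + cw C)%:R,
      (cy C)%:R < p.2 & p.2 < (cy C + ch C)%:R].

Definition cont_disjoint (R : realFieldType) (C D : container) : Prop :=
  forall p : R * R, ~~ (in_cont C p && in_cont D p).

Definition item_in (R : realFieldType) (C : container) (w h : nat) (x y : R) : Prop :=
  [/\ (cx C)%:R <= x, x + w%:R <= (cx C + cw C)%:R,
      (cy C)%:R <= y & y + h%:R <= (cy C + ch C)%:R].

Definition packed (R : realFieldType) (hor : bool) (T : finType) (C : container)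
  (S : {set T}) (w h : T -> nat) (x y : T -> R) : Prop :=
  (forall i, i \in S -> item_in C (w i) (h i) (x i) (y i)) /\
  (forall i j, i \in S -> j \in S -> i != j -> forall t : R,
     if hor then ~~ ((y i < t < y i + (h i)%:R) && (y j < t < y j + (h j)%:R))
     else ~~ ((x i < t < x i + (w i)%:R) && (x j < t < x j + (w j)%:R))).

(* Main.v *)
Require Import Defs.
From mathcomp Require Import all_boot all_order all_algebra.
From mathcomp Require Import lra zify.
Set Implicit Arguments. Unset Strict Implicit. Unset Printing Implicit Defensive.
Import Order.TTheory GRing.Theory Num.Theory.
Local Open Scope ring_scope.

Lemma stack_sum (R : realFieldType) (T : finType) (h : T -> nat) (y : T -> R) :
  forall n (S : {set T}) (a b : R), (#|S| <= n)%N -> a <= b ->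
  (forall i, i \in S -> (0 < h i)%N) ->
  (forall i, i \in S -> a <= y i /\ y i + (h i)%:R <= b) ->
  (forall i j, i \in S -> j \in S -> i != j -> forall t : R,
     ~~ ((y i < t < y i + (h i)%:R) && (y j < t < y j + (h j)%:R))) ->
  \sum_(i in S) ((h i)%:R : R) <= b - a.
Proof.
elim=> [|n IH] S a b.
  rewrite leqn0 => /eqP/cards0_eq -> ab _ _ _; rewrite big_set0; lra.
move=> Sn ab hpos inS disj.
have [S0|[i0 i0S]] := set_0Vmem S.
  by rewrite S0 big_set0; lra.
case: (arg_maxP y i0S) => m mS mmax.
have [am mb] := inS m mS.
have hm : (0 : R) < (h m)%:R by rewrite ltr0n hpos.
rewrite (bigD1 m) //=.
have below : forall j, j \in S :\ m -> y j + (h j)%:R <= y m.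
  move=> j; rewrite !inE => /andP[jm jS].
  have yjm : y j <= y m := mmax j jS.
  have hj : (0 : R) < (h j)%:R by rewrite ltr0n hpos.
  rewrite leNgt; apply/negP => lt.
  have D := disj m j mS jS ltac:(by rewrite eq_sym).
  case: (lerP (y m + (h m)%:R) (y j + (h j)%:R)) => c.
  - apply: (negP (D ((y m + (y m + (h m)%:R)) / 2))).
    apply/andP; split; apply/andP; split; lra.
  - apply: (negP (D ((y m + (y j + (h j)%:R)) / 2))).
    apply/andP; split; apply/andP; split; lra.
have IH' := IH (S :\ m) a (y m).
have : \sum_(i in S :\ m) ((h i)%:R : R) <= y m - a.
  apply: IH' => //.
  - by move: Sn; rewrite (cardsD1 m S) (_ : m \in S = true) // add1n ltnS.
  - by move=> i; rewrite inE => /andP[_ /hpos].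
  - move=> i iS; split; last exact: below.
    by move: iS; rewrite inE => /andP[_ /inS []].
  - move=> i j; rewrite !in_setD1 => /andP[_ iS] /andP[_ jS]; exact: disj.
have -> : \sum_(i in S | i != m) ((h i)%:R : R) = \sum_(i in S :\ m) ((h i)%:R : R) by apply: eq_bigl => i; rewrite in_setD1 andbC.
lra.
Qed.

Lemma sub_sum (T : finType) (P1 P2 : pred T) (F : T -> nat) :
  (forall i, P1 i -> P2 i) -> (\sum_(i | P1 i) F i <= \sum_(i | P2 i) F i)%N.
Proof.
move=> sub; rewrite [X in (_ <= X)%N](bigID P1) /=.
rewrite (eq_bigl P1); first exact: leq_addr.
by move=> i; case P1i: (P1 i); rewrite ?andbF // (sub _ P1i).
Qed.

Lemma prefix_key (T : finType) (P : pred T) (r : T -> nat) (F : T -> nat) a :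
  P a -> (\sum_(i | P i && (r i < r a)) F i + F a
            <= \sum_(i | P i && (r i <= r a)) F i)%N.
Proof.
move=> Pa; rewrite [X in (_ <= X)%N](bigD1 a) /=; last by rewrite Pa leqnn.
rewrite addnC leq_add2l; apply: sub_sum => i /andP[Pi lt].
rewrite Pi (ltnW lt) /=; apply/eqP => ia; by rewrite ia ltnn in lt.
Qed.

Lemma prefix_le (T : finType) (P : pred T) (r : T -> nat) (F : T -> nat) a b :
  P a -> (r a < r b)%N -> (\sum_(i | P i && (r i < r a)) F i + F a
            <= \sum_(i | P i && (r i < r b)) F i)%N.
Proof.
move=> Pa ab; apply: leq_trans (@prefix_key T P r F a Pa) _; apply: sub_sum.
by move=> i /andP[-> le]; exact: leq_ltn_trans le ab.
Qed.

Lemma prefix_tot (T : finType) (P : pred T) (r : T -> nat) (F : T -> nat) a :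
  P a -> (\sum_(i | P i && (r i < r a)) F i + F a <= \sum_(i | P i) F i)%N.
Proof.
move=> Pa; apply: leq_trans (@prefix_key T P r F a Pa) _; apply: sub_sum.
by move=> i /andP[].
Qed.

Lemma cont_disj_y (R : realFieldType) (C D : container) :
  (cy C + ch C <= cy D)%N -> cont_disjoint R C D.
Proof.
move=> le p; apply/negP => /andP[/and4P[_ _ _ a] /and4P[_ _ b _]].
move: le; rewrite -(ler_nat R) => le; lra.
Qed.

Lemma cont_disjC (R : realFieldType) (C D : container) :
  cont_disjoint R C D -> cont_disjoint R D C.
Proof. by move=> H p; rewrite andbC. Qed.

Lemma hor_case (R : realFieldType) (k : nat) (T : finType) (w h : T -> nat)
  (C : container) (I : {set T}) (x y : T -> R) :
  (0 < k)%N -> (forall i, i \in I -> (0 < w i)%N /\ (0 < h i)%N) ->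
  packed true C I w h x y ->
  exists (Cs : 'I_k -> container) (asg : T -> 'I_k) (x' y' : T -> R),
      [/\ (forall j, sub_container (Cs j) C),
          (forall j j', j != j' -> cont_disjoint R (Cs j) (Cs j')),
          (forall j, packed true (Cs j) [set i in I | asg i == j] w h x' y')
        & \sum_(j < k) ((cw (Cs j) * ch (Cs j))%:R : R)
            - \sum_(i in I) ((w i * h i)%:R : R)
          <= k%:R^-1 * (cw C * ch C)%:R].
Proof.
case: k => // k _ hpos [inC disj].
set W := cw C; set H := ch C.
have wW : forall i, i \in I -> (w i <= W)%N.
  move=> i /inC [a b _ _]; rewrite -(ler_nat R); move: b; rewrite natrD; lra.
have sumH : (\sum_(i in I) h i <= H)%N.
  have : \sum_(i in I) ((h i)%:R : R) <= (cy C + ch C)%:R - (cy C)%:R.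
    apply: (@stack_sum R T h y #|I| I) => //.
    - rewrite ler_nat; exact: leq_addr.
    - by move=> i /hpos [].
    - by move=> i /inC [_ _ a b]; split.
  by rewrite -(ler_nat R) natr_sum natrD; lra.
pose K := k.+1.
pose cls i := ((K * w i).-1 %/ W)%N.
pose asg i : 'I_K := inord (cls i).
pose Wj (j : 'I_K) := (j.+1 * W %/ K)%N.
pose Hj (j : 'I_K) := (\sum_(i in I | asg i == j) h i)%N.
pose Yj (j : 'I_K) := (cy C + \sum_(j' | predT j' && (nat_of_ord j' < nat_of_ord j)%N) Hj j')%N.
pose ys (j : 'I_K) (i : T) := (\sum_(i' | ((i' \in I) && (asg i' == j)) && (nat_of_ord (enum_rank i') < nat_of_ord (enum_rank i))%N) h i')%N.
pose Cs j := Container (cx C) (Yj j) (Wj j) (Hj j).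
have F4 : forall j, (Wj j <= W)%N.
  move=> j; rewrite /Wj; have := leq_trunc_div (j.+1 * W) K.
  have := ltn_ord j; set q := (_ %/ _)%N; nia.
have Fc : forall i, i \in I -> [/\ (cls i < K)%N, (w i <= Wj (asg i))%N
                              & (K * Wj (asg i) <= K * w i + W)%N].
  move=> i iI; have [w0 _] := hpos i iI; have wi := wW i iI.
  have W0 : (0 < W)%N by apply: leq_trans wi.
  have E := divn_eq (K * w i).-1 W; have Lr := ltn_pmod (K * w i).-1 W0.
  have c1 : (cls i < K)%N.
    rewrite /cls; move: E Lr; set q := (_ %/ _)%N; set r := (_ %% _)%N; nia.
  have -> : asg i = Ordinal c1 by apply: val_inj; rewrite /= inordK.
  split => //; rewrite /Wj /=.
    rewrite leq_divRL //; move: E Lr; rewrite /cls; set q := (_ %/ _)%N; set r := (_ %% _)%N; nia.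
  have := leq_trunc_div ((cls i).+1 * W) K.
  move: E Lr; rewrite /cls; set q := (_ %/ _)%N; set r := (_ %% _)%N; set s := (_ %/ K)%N; nia.
have sumHj : (\sum_(j | predT j) Hj j <= H)%N.
  by apply: leq_trans sumH; rewrite (partition_big asg xpredT).
exists Cs, asg, (fun _ => (cx C)%:R), (fun i => (Yj (asg i) + ys (asg i) i)%:R).
split.
- move=> j; split => //=; first by rewrite leq_add2l.
    exact: leq_addr.
  rewrite -addnA leq_add2l; apply: leq_trans sumHj.
  exact: (@prefix_tot _ predT (fun j : 'I_K => nat_of_ord j) Hj j).
- move=> j j' jj'; have : nat_of_ord j != nat_of_ord j' by [].
  case: ltngtP => // lt _.
    apply: cont_disj_y => /=; rewrite -addnA leq_add2l.
    exact: (@prefix_le _ predT (fun j : 'I_K => nat_of_ord j) Hj j j').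
  apply: cont_disjC; apply: cont_disj_y => /=; rewrite -addnA leq_add2l.
  exact: (@prefix_le _ predT (fun j : 'I_K => nat_of_ord j) Hj j' j).
- move=> j; split.
    move=> i; rewrite inE => /andP[iI /eqP aj]; have [_ F2 _] := Fc i iI.
    rewrite /item_in /= -aj; split.
    + exact: lexx.
    + by rewrite -natrD ler_nat leq_add2l.
    + by rewrite ler_nat leq_addr.
    + rewrite -natrD ler_nat -addnA leq_add2l /ys /Hj.
      apply: leq_trans (@prefix_tot _ (fun t => (t \in I) && (asg t == asg i))
                (fun t => nat_of_ord (enum_rank t)) h i ltac:(by rewrite /= iI eqxx)) _; exact: leqnn.
  move=> i i'; rewrite !inE => /andP[iI /eqP aj] /andP[iI' /eqP aj'] ii' t.
  have : nat_of_ord (enum_rank i) != nat_of_ord (enum_rank i').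
    by apply: contra ii' => /eqP/val_inj/enum_rank_inj ->.
  have ea : asg i' = asg i by rewrite aj aj'.
  rewrite /= ea.
  case: ltngtP => // lt _.
    have := (@prefix_le _ (fun t => (t \in I) && (asg t == asg i))
                (fun t => nat_of_ord (enum_rank t)) h i i' ltac:(by rewrite /= iI eqxx) lt).
    rewrite -(ler_nat R) !natrD => le.
    apply/negP => /andP[/andP[a1 a2] /andP[b1 b2]].
    rewrite -/(ys (asg i) i) -/(ys (asg i) i') in le; set Z := (\sum_(j' | _) Hj j')%:R in a1 a2 b1 b2; set u := (ys (asg i) i)%:R in a1 a2 le; set v := (ys (asg i) i')%:R in b1 b2 le; clearbody Z u v; clear -a1 a2 b1 b2 le; lra.
  have := (@prefix_le _ (fun t => (t \in I) && (asg t == asg i))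
              (fun t => nat_of_ord (enum_rank t)) h i' i ltac:(by rewrite /= iI' ea eqxx) lt).
  rewrite -(ler_nat R) !natrD => le.
  apply/negP => /andP[/andP[a1 a2] /andP[b1 b2]].
  rewrite -/(ys (asg i) i) -/(ys (asg i) i') in le; set Z := (\sum_(j' | _) Hj j')%:R in a1 a2 b1 b2; set u := (ys (asg i) i)%:R in a1 a2 le; set v := (ys (asg i) i')%:R in b1 b2 le; clearbody Z u v; clear -a1 a2 b1 b2 le; lra.
- have E : \sum_(j < K) ((cw (Cs j) * ch (Cs j))%:R : R)
           = \sum_(i in I) ((Wj (asg i) * h i)%:R : R).
    rewrite (partition_big asg xpredT) //=; apply: eq_bigr => j _.
    rewrite /Hj big_distrr /= natr_sum; apply: eq_bigr => i /andP[_ /eqP ->].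
    by [].
  rewrite E -sumrB.
  apply: (@le_trans _ _ (\sum_(i in I) K%:R^-1 * ((W * h i)%:R : R))).
    apply: ler_sum => i iI; have [_ _ F3] := Fc i iI.
    have := leq_mul F3 (leqnn (h i)); rewrite -(ler_nat R) !natrM natrD natrM.
    rewrite ler_pdivlMl ?ltr0n //.
    move: (Wj (asg i))%:R (w i)%:R W%:R (h i)%:R K%:R => a b c d e le.
    nra.
  rewrite -mulr_sumr ler_wpM2l ?invr_ge0 ?ler0n //.
  under eq_bigr do rewrite natrM.
  rewrite -mulr_sumr natrM ler_wpM2l ?ler0n // -natr_sum ler_nat //.
Qed.

Definition trc (C : container) := Container (cy C) (cx C) (ch C) (cw C).

Lemma packed_tr (R : realFieldType) hor (T : finType) (D : container) (S : {set T})
  (w h : T -> nat) (x y : T -> R) :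
  packed hor D S w h x y -> packed (~~ hor) (trc D) S h w y x.
Proof.
case=> [inD dj]; split.
  by move=> i /inD [a b c d]; split.
move=> i j iS jS ij t; have := dj i j iS jS ij t; by case: (hor).
Qed.

Lemma and4C (a b c d : bool) : [&& a, b, c & d] = [&& c, d, a & b].
Proof. by case: a; case: b; case: c; case: d. Qed.

Lemma disj_tr (R : realFieldType) (C D : container) :
  cont_disjoint R C D -> cont_disjoint R (trc C) (trc D).
Proof.
move=> H p; have := H (p.2, p.1).
by rewrite /in_cont /= [X in _ && X]and4C [X in X && _]and4C.
Qed.

Lemma sub_tr (C D : container) : sub_container C D -> sub_container (trc C) (trc D).
Proof. by case=> a b c d; split. Qed.

Unset Implicit Arguments.
Theorem mainTheorem13 (R : realFieldType) :
  exists g : nat -> R -> nat,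
  forall (hor : bool) (k : nat) (eps : R), (0 < k)%N -> 0 < eps ->
  forall (N : nat) (T : finType) (w h : T -> nat) (C : container)
         (I : {set T}) (x y : T -> R),
    in_K N C ->
    (forall i, i \in I -> (0 < w i)%N /\ (0 < h i)%N) ->
    packed hor C I w h x y ->
    (forall i, i \in I -> eps * N%:R < (if hor then w i else h i)%:R) ->
    exists (I' : {set T}) (Cs : 'I_k -> container) (asg : T -> 'I_k)
           (x' y' : T -> R),
      (I' \subset I /\ (#|I| <= #|I'| + g k eps)%N) /\
      [/\ (forall j, sub_container (Cs j) C),
          (forall j j', j != j' -> cont_disjoint R (Cs j) (Cs j')),
          (forall j, packed hor (Cs j) [set i in I' | asg i == j] w h x' y')
        & \sum_(j < k) ((cw (Cs j) * ch (Cs j))%:R : R)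
            - \sum_(i in I') ((w i * h i)%:R : R)
          <= k%:R^-1 * (cw C * ch C)%:R].
Proof.
exists (fun _ _ => 0%N) => hor k eps k0 _ N T w h C I x y _ hpos pk _.
case: hor pk => pk.
  have [Cs [asg [x' [y' [A B D E]]]]] := hor_case k0 hpos pk.
  by exists I, Cs, asg, x', y'; split; [rewrite subxx addn0 | split].
have hpos' : forall i, i \in I -> (0 < h i)%N /\ (0 < w i)%N.
  by move=> i /hpos [].
have [Cs [asg [x' [y' [A B D E]]]]] := hor_case k0 hpos' (packed_tr pk).
exists I, (fun j => trc (Cs j)), asg, y', x'; split; first by rewrite subxx addn0.
split.
- by move=> j; have := sub_tr (A j); case: (C).
- by move=> j j' jj'; apply: disj_tr; apply: B.
- by move=> j; exact: (packed_tr (D j)).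
- move: E; rewrite /= mulnC.
  by under eq_bigr do rewrite mulnC; under [X in _ - X <= _]eq_bigr do rewrite mulnC.
Qed.
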